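(* Assume the refinement setting of the context, with $F(u)=u$, $G(u)=u$, $p\cap\overline{q}\subseteq F(p\cup q)$, $p\cap\overline{q}\subseteq\mathrm{grd}(G)$, $p\cap\overline{q}\subseteq G(q)$, and additionally $$r^{-1}[p\cap\overline{q}]\cap\mathrm{grd}(G')\subseteq F'(\mathrm{grd}(G'))\cap H(\mathrm{grd}(G')).$$ Let $p'=r^{-1}[p]$, $q'=r^{-1}[q]$, $a=p'\cap\mathrm{grd}(G')$ and $S'(s)=F'(s)\cap G'(s)\cap H(s)$. Then $a\cap\overline{q'}\subseteq S'(a\cup q')$ and $a\cap\overline{q'}\subseteq\mathrm{grd}(G')\cap G'(q')$; that is, the basic liveness property $G'\cdot\, a\gg_w q'$ holds in the concrete system $S'$.
   Context: Refinement setting: $u$ (abstract states) and $v$ (concrete states) are sets; $F,G$ are conjunctive set transformers on $u$ and $F',G',H$ conjunctive set transformers on $v$ (conjunctive = preserves intersections of nonempty families of subsets, hence monotone). $\mathrm{grd}(E)=\overline{E(\varnothing)}$. $r\subseteq v\times u$ is a total relation (every $y\in v$ is related to some $x\in u$). For $a\subseteq v$, $r[a]=\{x\in u\mid\exists y\in a,(y,x)\in r\}$; for $b\subseteq u$, $r^{-1}[b]=\{y\in v\mid\exists x\in b,(y,x)\in r\}$. Complements $\overline{\cdot}$ are taken in $u$ for subsets of $u$ and in $v$ for subsets of $v$. The refinement conditions are: for all $s\subseteq v$, $F(\overline{r[\overline{s}]})\subseteq\overline{r[\overline{F'(s)}]}$, $G(\overline{r[\overline{s}]})\subseteq\overline{r[\overline{G'(s)}]}$,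 and $\overline{r[\overline{s}]}\subseteq\overline{r[\overline{H(s)}]}$. $p,q\subseteq u$. In a system $S$ (choice of its events, $S(s)=\bigcap_i E_i(s)$), the basic liveness property (ensures) $G\cdot a\gg_w b$ for a helpful event $G$ (choice of a nonempty subfamily of the events) means $a\cap\overline{b}\subseteq S(a\cup b)$ and $a\cap\overline{b}\subseteq\mathrm{grd}(G)\cap G(b)$. *)

(* Defs.v *)
From mathcomp Require Import all_boot.
From mathcomp Require Export boolp classical_sets.
Set Implicit Arguments. Unset Strict Implicit. Unset Printing Implicit Defensive.
Local Open Scope classical_set_scope.

Definition conjunctive (T : Type) (E : set T -> set T) : Prop :=
  forall S : set (set T), S !=set0 ->
    E (\bigcap_(X in S) X) = \bigcap_(X in S) E X.

Definition grd (T : Type) (E : set T -> set T) : set T := ~` (E set0).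

(* r ⊆ v × u ; (y, x) ∈ r  is  r y x *)
Definition total_rel (V U : Type) (r : V -> U -> Prop) : Prop :=
  forall y : V, exists x : U, r y x.

Definition rimg (V U : Type) (r : V -> U -> Prop) (a : set V) : set U :=
  [set x | exists2 y, a y & r y x].

Definition rpre (V U : Type) (r : V -> U -> Prop) (b : set U) : set V :=
  [set y | exists2 x, b x & r y x].

(* Basic liveness property (ensures) G · a ≫_w b in a system with
   set transformer S (the choice of its events) *)
Definition ensures_w (T : Type) (S G : set T -> set T) (a b : set T) : Prop :=
  a `&` ~` b `<=` S (a `|` b) /\ a `&` ~` b `<=` grd G `&` G b.

(* Main.v *)
Require Import Defs.
From mathcomp Require Import all_boot boolp classical_sets.
Local Open Scope classical_set_scope.

Lemma conj_mono (T : Type) (E : set T -> set T) (A B : set T) :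
  conjunctive E -> A `<=` B -> E A `<=` E B.
Proof.
move=> hE hAB.
have ne : [set X | X = A \/ X = B] !=set0 by exists A; left.
have h := hE _ ne.
have eq : \bigcap_(X in [set X | X = A \/ X = B]) X = A.
  rewrite eqEsubset; split => x.
  - by move=> hx; apply: hx; left.
  - by move=> hx X [->|->] //; apply: hAB.
rewrite eq in h.
move=> x hx; rewrite h in hx; exact: (hx B (or_intror erefl)).
Qed.

Lemma conj_inter (T : Type) (E : set T -> set T) (A B : set T) :
  conjunctive E -> E A `&` E B `<=` E (A `&` B).
Proof.
move=> hE x [hA hB].
have ne : [set X | X = A \/ X = B] !=set0 by exists A; left.
have h := hE _ ne.
have eq : \bigcap_(X in [set X | X = A \/ X = B]) X = A `&` B.
  rewrite eqEsubset; split => z.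
  - by move=> hz; split; apply: hz; [left|right].
  - by move=> [hzA hzB] X [->|->].
rewrite eq in h; rewrite h.
by move=> X [->|->].
Qed.

Arguments conj_mono {T E A B}.
Arguments conj_inter {T E A B}.

Theorem lemma6 (u v : Type)
  (F G : set u -> set u) (F' G' H : set v -> set v)
  (r : v -> u -> Prop) (p q : set u) :
  conjunctive F -> conjunctive G ->
  conjunctive F' -> conjunctive G' -> conjunctive H ->
  total_rel r ->
  (forall s : set v, F (~` rimg r (~` s)) `<=` ~` rimg r (~` F' s)) ->
  (forall s : set v, G (~` rimg r (~` s)) `<=` ~` rimg r (~` G' s)) ->
  (forall s : set v, ~` rimg r (~` s) `<=` ~` rimg r (~` H s)) ->
  F setT = setT -> G setT = setT ->
  p `&` ~` q `<=` F (p `|` q) ->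
  p `&` ~` q `<=` grd G ->
  p `&` ~` q `<=` G q ->
  rpre r (p `&` ~` q) `&` grd G' `<=` F' (grd G') `&` H (grd G') ->
  let p' := rpre r p in
  let q' := rpre r q in
  let a := p' `&` grd G' in
  let S' := fun s : set v => F' s `&` G' s `&` H s in
  a `&` ~` q' `<=` S' (a `|` q') /\ a `&` ~` q' `<=` grd G' `&` G' q'.
Proof.
move=> cF cG cF' cG' cH tot rF rG rH _ _ hF _ hG hyp p' q' a S'.
have key : forall y, a y -> ~ q' y ->
   exists x, [/\ r y x, p x & ~ q x].
  move=> y [[x px ryx] _] nq; exists x; split => //.
  by move=> qx; apply: nq; exists x.
have sub_pq : p `|` q `<=` ~` rimg r (~` (p' `|` q')).
  move=> x hx [y hy ryx]; apply: hy.
  by case: hx => h; [left|right]; exists x.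
have sub_q : q `<=` ~` rimg r (~` q').
  by move=> x hx [y hy ryx]; apply: hy; exists x.
have hG'q : forall y, a y -> ~ q' y -> G' q' y.
  move=> y ay nq; have [x [ryx px nqx]] := key y ay nq.
  have gx : G (~` rimg r (~` q')) x.
    by apply: (conj_mono cG sub_q); apply: hG.
  have := rG _ x gx => hn.
  by apply: contrapT => ng; apply: hn; exists y.
have hgrd : forall y, a y -> ~ q' y -> F' (grd G') y /\ H (grd G') y.
  move=> y ay nq; have [x [ryx px nqx]] := key y ay nq.
  apply: hyp; split; last by case: ay.
  by exists x.
have sub_s : (p' `|` q') `&` grd G' `<=` a `|` q'.
  by move=> y [[h|h] g]; [left|right].
split.
- move=> y [ay nq]; have [x [ryx px nqx]] := key y ay nq.
  have [hFg hHg] := hgrd y ay nq.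
  split; [split|].
  + apply: (conj_mono cF' sub_s); apply: (conj_inter cF'); split => //.
    have fx : F (~` rimg r (~` (p' `|` q'))) x.
      by apply: (conj_mono cF sub_pq); apply: hF; split => //; left.
    have := rF _ x fx => hn.
    by apply: contrapT => ng; apply: hn; exists y.
  + have sq : q' `<=` a `|` q' by move=> z hz; right.
    by apply: (conj_mono cG' sq); apply: hG'q.
  + apply: (conj_mono cH sub_s); apply: (conj_inter cH); split => //.
    have hx : (~` rimg r (~` (p' `|` q'))) x by apply: sub_pq; left.
    have := rH _ x hx => hn.
    by apply: contrapT => ng; apply: hn; exists y.
- move=> y [ay nq]; split; first by case: ay.
  exact: hG'q.
Qed.
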